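(* Let $J_{\mathrm{dual}}$, $H$, $W$ be as in the context. Assume that the set $\Gamma_+^*$ of minimizers of $J_{\mathrm{dual}}$ is nonempty, and let $\lambda^*\in\Gamma_+^*$. Let $\{\lambda^k\}$ be generated by the BSUM iteration described in the context, from a starting point $\lambda^0$ with $J_{\mathrm{dual}}(\lambda^0)<\infty$. Define $\mathcal F=\{\lambda:J_{\mathrm{dual}}(\lambda)\le J_{\mathrm{dual}}(\lambda^0)\}$ and $\mathcal R=\sup_{\lambda\in\mathcal F,\ \lambda'\in\Gamma_+^*}\|\lambda-\lambda'\|$, and assume $\mathcal R<\infty$. Let $\sigma=1/(9\|H\|\mathcal R^2)$ and $c=\max\{4\sigma-2,\ J_{\mathrm{dual}}(\lambda^0)-J_{\mathrm{dual}}(\lambda^* ),\ 2\}$. Then $J_{\mathrm{dual}}(\lambda^k)-J_{\mathrm{dual}}(\lambda^* )\le \frac{c}{\sigma}\cdot\frac1k$ for all $k\ge1$.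
   Context: $\Gamma_+^k=\{\mathrm{vec}(X):X\in\mathbb{R}^{k\times k}\text{ symmetric positive semidefinite}\}\subset\mathbb{R}^{k^2}$. $I_C$ denotes the indicator function of $C$, and $\Pi_C$ denotes Euclidean projection onto $C$. $\lambda=(\lambda_{\hat Q},\lambda_{\hat P},\lambda_{\hat R})\in\mathbb{R}^{n^2}\times\mathbb{R}^{n^2}\times\mathbb{R}^{m^2}$. $H$ is symmetric positive semidefinite, partitioned conformally into blocks $H_{ij}$ with $i,j\in\{Q,P,R\}$ and $H_{ji}=H_{ij}^\top$. (In the paper $H=U(\Omega^\top\Omega)^\dagger U^\top$.) $W=[0_{1\times n^2},\mathrm{vec}(\epsilon I_n)^\top,\mathrm{vec}(\epsilon I_m)^\top]^\top$ with $\epsilon>0$. The objective is $J_{\mathrm{dual}}(\lambda)=\tfrac14\lambda^\top H\lambda+\lambda^\top W+I_{\Gamma_+^n}(\lambda_{\hat Q})+I_{\Gamma_+^n}(\lambda_{\hat P})+I_{\Gamma_+^m}(\lambda_{\hat R})$. $\|H\|$ is the spectral norm. BSUM iteration: let $\alpha=\lambda_{\max}(H_{QQ})$, $\beta=\lambda_{\max}(H_{PP})$, $\gamma=\lambda_{\max}(H_{RR})$, all assumed positive. The blocks are updated cyclically. Each block is updated by minimizing $J_{\mathrm{dual}}$ in that block, with the other blocks fixed at their most recent values, plus the proximal term $\tfrac12\|\lambda_i-\lambda_i^k\|^2_{S_i}$, where $S_{\hat Q}=\alpha I-\tfrac12H_{QQ}$, $S_{\hat P}=\beta I-\tfrac12H_{PP}$,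 $S_{\hat R}=\gamma I-\tfrac12H_{RR}$. Explicitly: - $\lambda_{\hat Q}^{k+1}=\Pi_{\Gamma_+^n}\big(\lambda_{\hat Q}^k-\tfrac1{2\alpha}(H_{QQ}\lambda_{\hat Q}^k+H_{QP}\lambda_{\hat P}^k+H_{QR}\lambda_{\hat R}^k)\big)$; - $\lambda_{\hat P}^{k+1}=\Pi_{\Gamma_+^n}\big(\lambda_{\hat P}^k-\tfrac1{2\beta}(H_{PQ}\lambda_{\hat Q}^{k+1}+H_{PP}\lambda_{\hat P}^k+H_{PR}\lambda_{\hat R}^k)-\tfrac1\beta\mathrm{vec}(\epsilon I_n)\big)$; - $\lambda_{\hat R}^{k+1}=\Pi_{\Gamma_+^m}\big(\lambda_{\hat R}^k-\tfrac1{2\gamma}(H_{RQ}\lambda_{\hat Q}^{k+1}+H_{RP}\lambda_{\hat P}^{k+1}+H_{RR}\lambda_{\hat R}^k)-\tfrac1\gamma\mathrm{vec}(\epsilon I_m)\big)$. *)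

(* Defs.v *)
From HB Require Import structures.
From mathcomp Require Import all_boot all_order all_algebra.
From mathcomp Require Import boolp classical_sets reals constructive_ereal.
Set Implicit Arguments. Unset Strict Implicit. Unset Printing Implicit Defensive.
Import Order.TTheory GRing.Theory Num.Theory.
Local Open Scope ring_scope.

Section Defs.
Variable R : realType.

Definition enorm (p : nat) (v : 'cV[R]_p) : R := Num.sqrt (\sum_i v i 0 ^+ 2).

Definition lambda_max (p : nat) (A : 'M[R]_p) : R :=
  sup [set ((x^T *m A *m x) 0 0) | x in [set x : 'cV[R]_p | enorm x = 1]]%classic.

Definition spec_norm (p q : nat) (A : 'M[R]_(p, q)) : R :=
  sup [set enorm (A *m x) | x in [set x : 'cV[R]_q | enorm x <= 1]]%classic.

Definition is_psd (p : nat) (A : 'M[R]_p) : Prop :=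
  A^T = A /\ forall u : 'cV[R]_p, 0 <= (u^T *m A *m u) 0 0.

Definition Gamma_plus (k : nat) : set 'cV[R]_(k * k) :=
  [set v | exists X : 'M[R]_k, is_psd X /\ v = (mxvec X)^T]%classic.

Definition is_proj (p : nat) (C : set 'cV[R]_p) (x y : 'cV[R]_p) : Prop :=
  C y /\ forall z, C z -> enorm (x - y) <= enorm (x - z).

Definition indic (T : Type) (C : set T) (x : T) : \bar R :=
  if pselect (C x) then 0%E else +oo%E.

Definition dimN (n m : nat) := ((n * n + n * n) + m * m)%N.

Definition blkQ n m (l : 'cV[R]_(dimN n m)) : 'cV[R]_(n * n) := usubmx (usubmx l).
Definition blkP n m (l : 'cV[R]_(dimN n m)) : 'cV[R]_(n * n) := dsubmx (usubmx l).
Definition blkR n m (l : 'cV[R]_(dimN n m)) : 'cV[R]_(m * m) := dsubmx l.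

Definition HQQ n m (H : 'M[R]_(dimN n m)) := ulsubmx (ulsubmx H).
Definition HQP n m (H : 'M[R]_(dimN n m)) := ursubmx (ulsubmx H).
Definition HQR n m (H : 'M[R]_(dimN n m)) := usubmx (ursubmx H).
Definition HPQ n m (H : 'M[R]_(dimN n m)) := dlsubmx (ulsubmx H).
Definition HPP n m (H : 'M[R]_(dimN n m)) := drsubmx (ulsubmx H).
Definition HPR n m (H : 'M[R]_(dimN n m)) := dsubmx (ursubmx H).
Definition HRQ n m (H : 'M[R]_(dimN n m)) := lsubmx (dlsubmx H).
Definition HRP n m (H : 'M[R]_(dimN n m)) := rsubmx (dlsubmx H).
Definition HRR n m (H : 'M[R]_(dimN n m)) := drsubmx H.

Definition Wvec n m (eps : R) : 'cV[R]_(dimN n m) :=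
  col_mx (col_mx 0 (mxvec (eps%:M : 'M[R]_n))^T) (mxvec (eps%:M : 'M[R]_m))^T.

Definition Jdual n m (H : 'M[R]_(dimN n m)) (eps : R) (l : 'cV[R]_(dimN n m))
  : \bar R :=
  (((4%:R)^-1 * (l^T *m H *m l) 0 0 + (l^T *m Wvec n m eps) 0 0)%:E
   + indic (@Gamma_plus n) (blkQ l) + indic (@Gamma_plus n) (blkP l)
   + indic (@Gamma_plus m) (blkR l))%E.

(* BSUM iteration, each step written with the (unique) Euclidean projection *)
Definition bsum_step n m (H : 'M[R]_(dimN n m)) (eps : R)
  (l l' : 'cV[R]_(dimN n m)) : Prop :=
  let a := lambda_max (HQQ H) in
  let b := lambda_max (HPP H) in
  let c := lambda_max (HRR H) in
  [/\ is_proj (@Gamma_plus n)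
        (blkQ l - (2 * a)^-1 *: (HQQ H *m blkQ l + HQP H *m blkP l + HQR H *m blkR l))
        (blkQ l'),
      is_proj (@Gamma_plus n)
        (blkP l - (2 * b)^-1 *: (HPQ H *m blkQ l' + HPP H *m blkP l + HPR H *m blkR l)
                - b^-1 *: (mxvec (eps%:M : 'M[R]_n))^T)
        (blkP l') &
      is_proj (@Gamma_plus m)
        (blkR l - (2 * c)^-1 *: (HRQ H *m blkQ l' + HRP H *m blkP l' + HRR H *m blkR l)
                - c^-1 *: (mxvec (eps%:M : 'M[R]_m))^T)
        (blkR l')].

Definition is_minimizer n m (H : 'M[R]_(dimN n m)) (eps : R) (l : 'cV[R]_(dimN n m)) :=
  forall l', (Jdual H eps l <= Jdual H eps l')%E.

End Defs.

(* Main.v *)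
Require Import Defs.
From HB Require Import structures.
From mathcomp Require Import all_boot all_order all_algebra.
From mathcomp Require Import boolp classical_sets reals constructive_ereal.
From mathcomp Require Import ring lra.
Import Order.TTheory GRing.Theory Num.Theory.
Local Open Scope ring_scope.
Set Implicit Arguments. Unset Strict Implicit.

Section Dot.
Variable R : realType.

Definition dot (p : nat) (u v : 'cV[R]_p) : R := (u^T *m v) 0 0.

Lemma dotE p (u v : 'cV[R]_p) : dot u v = \sum_i u i 0 * v i 0.
Proof. by rewrite /dot !mxE; apply: eq_bigr => i _; rewrite !mxE. Qed.

Lemma dotC p (u v : 'cV[R]_p) : dot u v = dot v u.
Proof. by rewrite !dotE; apply: eq_bigr => i _; rewrite mulrC. Qed.

Lemma dotDl p (u v w : 'cV[R]_p) : dot (u + v) w = dot u w + dot v w.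
Proof. by rewrite !dotE -big_split; apply: eq_bigr => i _; rewrite !mxE mulrDl. Qed.

Lemma dotDr p (u v w : 'cV[R]_p) : dot w (u + v) = dot w u + dot w v.
Proof. by rewrite dotC dotDl !(dotC w). Qed.

Lemma dotZl p a (u v : 'cV[R]_p) : dot (a *: u) v = a * dot u v.
Proof. by rewrite !dotE mulr_sumr; apply: eq_bigr => i _; rewrite !mxE mulrA. Qed.

Lemma dotZr p a (u v : 'cV[R]_p) : dot v (a *: u) = a * dot v u.
Proof. by rewrite dotC dotZl dotC. Qed.

Lemma dotNl p (u v : 'cV[R]_p) : dot (- u) v = - dot u v.
Proof. by rewrite -scaleN1r dotZl mulN1r. Qed.

Lemma dotNr p (u v : 'cV[R]_p) : dot v (- u) = - dot v u.
Proof. by rewrite dotC dotNl dotC. Qed.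

Lemma dotBl p (u v w : 'cV[R]_p) : dot (u - v) w = dot u w - dot v w.
Proof. by rewrite dotDl dotNl. Qed.

Lemma dotBr p (u v w : 'cV[R]_p) : dot w (u - v) = dot w u - dot w v.
Proof. by rewrite dotDr dotNr. Qed.

Lemma dot0l p (v : 'cV[R]_p) : dot 0 v = 0.
Proof. by rewrite dotE big1 // => i _; rewrite mxE mul0r. Qed.

Lemma dot0r p (v : 'cV[R]_p) : dot v 0 = 0.
Proof. by rewrite dotC dot0l. Qed.

Lemma dot_ge0 p (v : 'cV[R]_p) : 0 <= dot v v.
Proof. by rewrite dotE sumr_ge0 // => i _; rewrite -expr2 sqr_ge0. Qed.

Lemma dot_col p q (a c : 'cV[R]_p) (b d : 'cV[R]_q) :
  dot (col_mx a b) (col_mx c d) = dot a c + dot b d.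
Proof. by rewrite /dot tr_col_mx mul_row_col mxE. Qed.

Lemma enormE p (v : 'cV[R]_p) : enorm v = Num.sqrt (dot v v).
Proof. by rewrite /enorm dotE; congr Num.sqrt; apply: eq_bigr => i _; rewrite expr2. Qed.

Lemma dot_mul p (A : 'M[R]_p) (u v : 'cV[R]_p) : dot u (A *m v) = dot v (A^T *m u).
Proof.
rewrite /dot; have -> : v^T *m (A^T *m u) = (u^T *m (A *m v))^T.
  by rewrite !trmx_mul trmxK mulmxA.
by rewrite [in RHS]mxE.
Qed.

Lemma dot_sym p (A : 'M[R]_p) (u v : 'cV[R]_p) : A^T = A -> dot u (A *m v) = dot v (A *m u).
Proof. by move=> HA; rewrite dot_mul HA. Qed.

Lemma dotMl p (A : 'M[R]_p) (u v w : 'cV[R]_p) :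
  dot w (A *m (u + v)) = dot w (A *m u) + dot w (A *m v).
Proof. by rewrite mulmxDr dotDr. Qed.

End Dot.

Section Blocks.
Variable R : realType.
Variables n m : nat.
Local Notation N := (dimN n m).
Local Notation V := 'cV[R]_N.

Definition EQ (x : 'cV[R]_(n * n)) : V := col_mx (col_mx x 0) 0.
Definition EP (x : 'cV[R]_(n * n)) : V := col_mx (col_mx 0 x) 0.
Definition ER (x : 'cV[R]_(m * m)) : V := col_mx 0 x.

Lemma blkQ_EQ x : blkQ (EQ x) = x. Proof. by rewrite /blkQ /EQ !col_mxKu. Qed.
Lemma blkP_EQ x : blkP (EQ x) = 0. Proof. by rewrite /blkP /EQ col_mxKu col_mxKd. Qed.
Lemma blkR_EQ x : blkR (EQ x) = 0. Proof. by rewrite /blkR /EQ col_mxKd. Qed.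
Lemma blkQ_EP x : blkQ (EP x) = 0. Proof. by rewrite /blkQ /EP !col_mxKu. Qed.
Lemma blkP_EP x : blkP (EP x) = x. Proof. by rewrite /blkP /EP col_mxKu col_mxKd. Qed.
Lemma blkR_EP x : blkR (EP x) = 0. Proof. by rewrite /blkR /EP col_mxKd. Qed.
Lemma blkQ_ER x : blkQ (ER x) = 0.
Proof. by rewrite /blkQ /ER col_mxKu; apply/matrixP => i j; rewrite !mxE. Qed.
Lemma blkP_ER x : blkP (ER x) = 0.
Proof. by rewrite /blkP /ER col_mxKu; apply/matrixP => i j; rewrite !mxE. Qed.
Lemma blkR_ER x : blkR (ER x) = x. Proof. by rewrite /blkR /ER col_mxKd. Qed.

Lemma blkQD (u v : V) : blkQ (u + v) = blkQ u + blkQ v.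
Proof. by apply/matrixP => i j; rewrite !mxE. Qed.
Lemma blkPD (u v : V) : blkP (u + v) = blkP u + blkP v.
Proof. by apply/matrixP => i j; rewrite !mxE. Qed.
Lemma blkRD (u v : V) : blkR (u + v) = blkR u + blkR v.
Proof. by apply/matrixP => i j; rewrite !mxE. Qed.
Lemma blkQZ a (u : V) : blkQ (a *: u) = a *: blkQ u.
Proof. by apply/matrixP => i j; rewrite !mxE. Qed.
Lemma blkPZ a (u : V) : blkP (a *: u) = a *: blkP u.
Proof. by apply/matrixP => i j; rewrite !mxE. Qed.
Lemma blkRZ a (u : V) : blkR (a *: u) = a *: blkR u.
Proof. by apply/matrixP => i j; rewrite !mxE. Qed.
Lemma blkQN (u : V) : blkQ (- u) = - blkQ u.
Proof. by apply/matrixP => i j; rewrite !mxE. Qed.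
Lemma blkPN (u : V) : blkP (- u) = - blkP u.
Proof. by apply/matrixP => i j; rewrite !mxE. Qed.
Lemma blkRN (u : V) : blkR (- u) = - blkR u.
Proof. by apply/matrixP => i j; rewrite !mxE. Qed.
Lemma blkQB (u v : V) : blkQ (u - v) = blkQ u - blkQ v.
Proof. by rewrite blkQD blkQN. Qed.
Lemma blkPB (u v : V) : blkP (u - v) = blkP u - blkP v.
Proof. by rewrite blkPD blkPN. Qed.
Lemma blkRB (u v : V) : blkR (u - v) = blkR u - blkR v.
Proof. by rewrite blkRD blkRN. Qed.

Lemma blk_decomp (v : V) : v = EQ (blkQ v) + EP (blkP v) + ER (blkR v).
Proof.
rewrite /EQ /EP /ER !add_col_mx !addr0 !add0r.
by rewrite /blkQ /blkP /blkR !vsubmxK.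
Qed.

Lemma blk_eq (u v : V) : blkQ u = blkQ v -> blkP u = blkP v -> blkR u = blkR v -> u = v.
Proof. by move=> h1 h2 h3; rewrite (blk_decomp u) (blk_decomp v) h1 h2 h3. Qed.

Lemma dot_blk (u v : V) : dot u v = dot (blkQ u) (blkQ v) + dot (blkP u) (blkP v) + dot (blkR u) (blkR v).
Proof.
by rewrite -{1}(vsubmxK u) -{1}(vsubmxK v) dot_col -(vsubmxK (usubmx u)) -(vsubmxK (usubmx v)) dot_col.
Qed.

Lemma dot_EQ x (v : V) : dot (EQ x) v = dot x (blkQ v).
Proof. by rewrite dot_blk blkQ_EQ blkP_EQ blkR_EQ !dot0l !addr0. Qed.
Lemma dot_EP x (v : V) : dot (EP x) v = dot x (blkP v).
Proof. by rewrite dot_blk blkQ_EP blkP_EP blkR_EP !dot0l addr0 add0r. Qed.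
Lemma dot_ER x (v : V) : dot (ER x) v = dot x (blkR v).
Proof. by rewrite dot_blk blkQ_ER blkP_ER blkR_ER !dot0l !add0r. Qed.

Lemma EQ_lin a x y : EQ (a *: x + y) = a *: EQ x + EQ y.
Proof. by apply: blk_eq; rewrite ?blkQD ?blkPD ?blkRD ?blkQZ ?blkPZ ?blkRZ ?blkQ_EQ ?blkP_EQ ?blkR_EQ ?scaler0 ?addr0. Qed.
Lemma EP_lin a x y : EP (a *: x + y) = a *: EP x + EP y.
Proof. by apply: blk_eq; rewrite ?blkQD ?blkPD ?blkRD ?blkQZ ?blkPZ ?blkRZ ?blkQ_EP ?blkP_EP ?blkR_EP ?scaler0 ?addr0. Qed.
Lemma ER_lin a x y : ER (a *: x + y) = a *: ER x + ER y.
Proof. by apply: blk_eq; rewrite ?blkQD ?blkPD ?blkRD ?blkQZ ?blkPZ ?blkRZ ?blkQ_ER ?blkP_ER ?blkR_ER ?scaler0 ?addr0. Qed.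

Variable H : 'M[R]_N.

Lemma blkQ_mul (v : V) : blkQ (H *m v) = HQQ H *m blkQ v + HQP H *m blkP v + HQR H *m blkR v.
Proof.
rewrite /blkQ /blkP /blkR /HQQ /HQP /HQR.
rewrite -{1}(submxK H) -{1}(vsubmxK v) mul_block_col col_mxKu.
rewrite -{1}(submxK (ulsubmx H)) -{1}(vsubmxK (usubmx v)) mul_block_col.
rewrite -{1}(vsubmxK (ursubmx H)) mul_col_mx add_col_mx col_mxKu.
by [].
Qed.

Lemma blkP_mul (v : V) : blkP (H *m v) = HPQ H *m blkQ v + HPP H *m blkP v + HPR H *m blkR v.
Proof.
rewrite /blkQ /blkP /blkR /HPQ /HPP /HPR.
rewrite -{1}(submxK H) -{1}(vsubmxK v) mul_block_col col_mxKu.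
rewrite -{1}(submxK (ulsubmx H)) -{1}(vsubmxK (usubmx v)) mul_block_col.
rewrite -{1}(vsubmxK (ursubmx H)) mul_col_mx add_col_mx col_mxKd.
by [].
Qed.

Lemma blkR_mul (v : V) : blkR (H *m v) = HRQ H *m blkQ v + HRP H *m blkP v + HRR H *m blkR v.
Proof.
rewrite /blkQ /blkP /blkR /HRQ /HRP /HRR.
rewrite -{1}(submxK H) -{1}(vsubmxK v) mul_block_col col_mxKd.
rewrite -{1}(hsubmxK (dlsubmx H)) -{1}(vsubmxK (usubmx v)) mul_row_col.
by [].
Qed.

Lemma blkQ_HEQ x : blkQ (H *m EQ x) = HQQ H *m x.
Proof. by rewrite blkQ_mul blkQ_EQ blkP_EQ blkR_EQ !mulmx0 !addr0. Qed.
Lemma blkP_HEP x : blkP (H *m EP x) = HPP H *m x.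
Proof. by rewrite blkP_mul blkQ_EP blkP_EP blkR_EP !mulmx0 addr0 add0r. Qed.
Lemma blkR_HER x : blkR (H *m ER x) = HRR H *m x.
Proof. by rewrite blkR_mul blkQ_ER blkP_ER blkR_ER !mulmx0 !add0r. Qed.

End Blocks.

Section Gen.
Variable R : realType.
Variable p : nat.
Local Notation V := 'cV[R]_p.

Lemma quad_expand (A : 'M[R]_p) (U W : V) t : A^T = A ->
  dot (t *: U + W) (A *m (t *: U + W)) =
  t ^+ 2 * dot U (A *m U) + 2 * t * dot U (A *m W) + dot W (A *m W).
Proof.
move=> HA; rewrite mulmxDr -scalemxAr !dotDl !dotDr !dotZl !dotZr.
rewrite (dot_sym W U HA); ring.
Qed.

Lemma cs_form (A : 'M[R]_p) (U W : V) s : A^T = A -> 0 < s ->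
  (forall t, 0 <= dot (t *: U + W) (A *m (t *: U + W))) ->
  2 * `|dot U (A *m W)| <= s * dot U (A *m U) + s^-1 * dot W (A *m W).
Proof.
move=> HA s0 Hpos.
have h1 := Hpos s; have h2 := Hpos (- s).
rewrite quad_expand // in h1; rewrite quad_expand // in h2.
set a := dot U (A *m U) in h1 h2 *; set b := dot U (A *m W) in h1 h2 *;
set c := dot W (A *m W) in h1 h2 *.
have ss : s * s^-1 = 1 by rewrite mulfV // gt_eqF.
have si0 : 0 < s^-1 by rewrite invr_gt0.
have e1 : 2 * b <= s * a + s^-1 * c.
  have : s * (2 * b) <= s * (s * a + s^-1 * c).
    rewrite mulrDr mulrA (mulrA s s^-1) ss mul1r; nra.
  by rewrite ler_pM2l.
have e2 : - (2 * b) <= s * a + s^-1 * c.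
  have : s * (- (2 * b)) <= s * (s * a + s^-1 * c).
    rewrite mulrDr mulrA (mulrA s s^-1) ss mul1r; nra.
  by rewrite ler_pM2l.
have -> : 2 * `|b| = `|2 * b| by rewrite normrM ger0_norm.
by rewrite ler_norml e1 andbT lerNl.
Qed.

Lemma dot_eq0 (v : V) : dot v v = 0 -> v = 0.
Proof.
rewrite dotE => /psumr_eq0P h; apply/matrixP => i j.
have h' := h (fun i _ => ltac:(by rewrite -expr2 sqr_ge0)).
rewrite (ord1 j) mxE; have := h' i isT.
by rewrite -expr2 => /eqP; rewrite sqrf_eq0 => /eqP.
Qed.

Lemma entry_le1 (v : V) i : dot v v <= 1 -> `|v i 0| <= 1.
Proof.
move=> h.
have : v i 0 ^+ 2 <= dot v v.
  rewrite dotE (bigD1 i) //= expr2 lerDl sumr_ge0 // => j _.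
  by rewrite -expr2 sqr_ge0.
move=> h2; have h3 : `|v i 0| ^+ 2 <= 1 by rewrite real_normK ?num_real //; lra.
rewrite -(expr1n _ 2%N) in h3.
by rewrite -(ler_pXn2r (n := 2)) // ?nnegrE ?normr_ge0.
Qed.

Lemma enorm1 (v : V) : enorm v = 1 -> dot v v = 1.
Proof.
rewrite enormE => h.
by rewrite -(sqr_sqrtr (dot_ge0 v)) h expr1n.
Qed.

Lemma cs_unit (U W : V) : dot U U = 1 -> dot U W <= enorm W.
Proof.
move=> hU.
have [W0|Wn0] := eqVneq (dot W W) 0.
  by rewrite (dot_eq0 W0) dot0r enormE sqrtr_ge0.
have ew : 0 < enorm W.
  by rewrite enormE sqrtr_gt0 lt_def Wn0 dot_ge0.
have := @cs_form 1%:M U W (enorm W) (trmx1 _ _) ew.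
rewrite !mul1mx hU => /(_ (fun t => ltac:(by rewrite mul1mx dot_ge0))).
have -> : dot W W = enorm W ^+ 2 by rewrite enormE sqr_sqrtr // dot_ge0.
rewrite expr2 mulrA mulVf ?gt_eqF // mul1r mulr1 => h.
have := ler_norm (dot U W); lra.
Qed.

Definition convex_set (C : set V) := forall y z t, C y -> C z -> 0 <= t <= 1 -> C (y + t *: (z - y)).

Lemma proj_vi (C : set V) x y z : convex_set C -> is_proj C x y -> C z ->
  dot (x - y) (z - y) <= 0.
Proof.
move=> cC [Cy Hmin] Cz.
set b := dot (x - y) (z - y); set q := dot (z - y) (z - y).
have key : forall t, 0 <= t <= 1 -> 2 * t * b <= t ^+ 2 * q.
  move=> t /andP[t0 t1].
  have := Hmin _ (cC y z t Cy Cz (introT andP (conj t0 t1))).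
  rewrite !enormE ler_sqrt ?dot_ge0 //.
  have -> : x - (y + t *: (z - y)) = (- t) *: (z - y) + (x - y).
    by rewrite scaleNr opprD (addrC (- y)) addrCA.
  have := @quad_expand 1%:M (z - y) (x - y) (- t) (trmx1 _ _).
  rewrite !mul1mx => ->.
  rewrite (dotC (z - y) (x - y)) -/b -/q; nra.
have q0 : 0 <= q by apply: dot_ge0.
rewrite leNgt; apply/negP => b0.
have [qb|bq] := lerP q b.
  have := key 1; rewrite ler01 lexx => /(_ isT); nra.
have qp : 0 < q by apply: lt_le_trans b0 (ltW bq).
have := key (b / q).
have t01 : 0 <= b / q <= 1.
  by rewrite divr_ge0 ?(ltW b0) ?(ltW qp) //= ler_pdivrMr // mul1r (ltW bq).
move=> /(_ t01).
have -> : (b / q) ^+ 2 * q = b * (b / q).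
  by field; rewrite gt_eqF.
move=> h.
have bq0 : 0 < b / q by rewrite divr_gt0.
nra.
Qed.

End Gen.

Section Sup.
Variable R : realType.

Lemma nonempty_of_sup_gt0 (S : set R) : 0 < sup S -> (S !=set0)%classic.
Proof.
move=> h; case: (pselect (S !=set0)%classic) => // nS.
have S0 : S = set0.
  apply/seteqP; split => y hy //; exfalso; apply: nS; by exists y.
by move: h; rewrite S0 sup0 ltxx.
Qed.

Lemma quad_bound p (A : 'M[R]_p) (x : 'cV[R]_p) : dot x x <= 1 ->
  dot x (A *m x) <= \sum_i \sum_j `|A i j|.
Proof.
move=> hx; rewrite dotE.
apply: le_trans (ler_norm _) _.
apply: le_trans (ler_norm_sum _ _ _) _.
apply: ler_sum => i _; rewrite mxE normrM.
have hi := entry_le1 i hx.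
apply: (@le_trans _ _ (`|\sum_j A i j * x j 0|)).
  by rewrite ler_piMl ?normr_ge0.
apply: le_trans (ler_norm_sum _ _ _) _.
apply: ler_sum => j _; rewrite normrM.
by rewrite ler_piMr ?normr_ge0 ?entry_le1.
Qed.

Lemma rayleigh p (A : 'M[R]_p) : 0 < lambda_max A ->
  forall x, dot x (A *m x) <= lambda_max A * dot x x.
Proof.
move=> hpos x.
set S := [set ((y^T *m A *m y) 0 0) | y in [set y : 'cV[R]_p | enorm y = 1]]%classic.
have hS : has_sup S.
  split; first exact: nonempty_of_sup_gt0.
  exists (\sum_i \sum_j `|A i j|) => _ [y /= hy <-].
  by rewrite -mulmxA quad_bound // enorm1 // lexx.
have ub : forall y, enorm y = 1 -> dot y (A *m y) <= lambda_max A.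
  move=> y hy; apply: (sup_upper_bound hS); exists y => //.
  by rewrite /dot mulmxA.
have [x0|xn0] := eqVneq (dot x x) 0.
  by rewrite (dot_eq0 x0) mulmx0 !dot0r mulr0.
have dpos : 0 < dot x x by rewrite lt_def xn0 dot_ge0.
set r := Num.sqrt (dot x x).
have rpos : 0 < r by rewrite sqrtr_gt0.
have r2 : r ^+ 2 = dot x x by rewrite sqr_sqrtr // dot_ge0.
have := ub (r^-1 *: x).
rewrite enormE dotZl dotZr -scalemxAr dotZl dotZr.
have -> : r^-1 * (r^-1 * dot x x) = 1.
  by rewrite -r2; field; rewrite gt_eqF.
rewrite sqrtr1 => /(_ erefl) h.
have : r ^+ 2 * (r^-1 * (r^-1 * dot x (A *m x))) <= r ^+ 2 * lambda_max A.
  by rewrite ler_pM2l // exprn_gt0.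
have -> : r ^+ 2 * (r^-1 * (r^-1 * dot x (A *m x))) = dot x (A *m x).
  by field; rewrite gt_eqF.
by rewrite r2 mulrC.
Qed.

Lemma spec_ub p (H : 'M[R]_p) x : dot x x <= 1 -> enorm (H *m x) <= spec_norm H.
Proof.
move=> hx.
set S := [set enorm (H *m y) | y in [set y : 'cV[R]_p | enorm y <= 1]]%classic.
have hS : has_sup S.
  split.
    exists (enorm (H *m 0)); exists 0 => //=.
    by rewrite enormE dot0r sqrtr0 ler01.
  exists (Num.sqrt (\sum_i (\sum_j `|H i j|) ^+ 2)) => _ [y /= hy <-].
  have hy' : dot y y <= 1.
    by move: hy; rewrite enormE -[X in _ <= X]sqrtr1 ler_sqrt.
  rewrite enormE dotE ler_sqrt; last by rewrite sumr_ge0 // => i _; rewrite sqr_ge0.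
  apply: ler_sum => i _; rewrite -expr2.
  have hb : `|(H *m y) i 0| <= \sum_j `|H i j|.
    rewrite mxE; apply: le_trans (ler_norm_sum _ _ _) _.
    apply: ler_sum => j _; rewrite normrM.
    by rewrite ler_piMr ?normr_ge0 ?entry_le1.
  rewrite -real_normK ?num_real //.
  by rewrite lerXn2r ?nnegrE ?normr_ge0 // (le_trans _ hb) ?normr_ge0.
apply: (sup_upper_bound hS); exists x => //=.
by rewrite enormE -sqrtr1 ler_sqrt.
Qed.

Lemma lmax_le_spec p q (A : 'M[R]_p) (H : 'M[R]_q) (E : 'cV[R]_p -> 'cV[R]_q) :
  (forall x, dot (E x) (E x) = dot x x) ->
  (forall x, dot x (A *m x) = dot (E x) (H *m E x)) ->
  0 < lambda_max A -> lambda_max A <= spec_norm H.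
Proof.
move=> hE hA hpos.
apply: ge_sup; first exact: nonempty_of_sup_gt0.
move=> _ [y /= hy <-].
rewrite -mulmxA -/(dot y (A *m y)) hA.
have u1 : dot (E y) (E y) = 1 by rewrite hE enorm1.
apply: le_trans (cs_unit _ u1) _.
by apply: spec_ub; rewrite u1.
Qed.

End Sup.

Section Feas.
Variable R : realType.

Lemma Gamma_convex k : convex_set (@Gamma_plus R k).
Proof.
move=> y z t [Y [[YT Yp] ->]] [Z [[ZT Zp] ->]] /andP[t0 t1].
exists (Y + t *: (Z - Y)); split; last first.
  by rewrite !linearD /= !linearZ /= !linearN.
split.
  by rewrite !linearD /= !linearZ /= !linearN /= YT ZT.
move=> u.
have -> : (u^T *m (Y + t *: (Z - Y)) *m u) 0 0 =
   (1 - t) * (u^T *m Y *m u) 0 0 + t * (u^T *m Z *m u) 0 0.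
  rewrite mulmxDr mulmxDl -scalemxAr -scalemxAl mulmxBr mulmxBl.
  set a := u^T *m Y *m u; set b := u^T *m Z *m u.
  rewrite [LHS]mxE [X in _ + X]mxE [X in _ * X]mxE ?mxE; ring.
have := Yp u; have := Zp u; nra.
Qed.

Lemma indic_in T (C : set T) x : C x -> @indic R T C x = 0%E.
Proof. by rewrite /indic; case: pselect. Qed.

Lemma indic_out T (C : set T) x : ~ C x -> @indic R T C x = +oo%E.
Proof. by rewrite /indic; case: pselect. Qed.

Variables n m : nat.
Local Notation N := (dimN n m).

Definition fval (H : 'M[R]_N) eps (l : 'cV[R]_N) :=
  4%:R^-1 * dot l (H *m l) + dot l (Wvec n m eps).

Definition feas (l : 'cV[R]_N) :=
  [/\ Gamma_plus (blkQ l), Gamma_plus (blkP l) & Gamma_plus (blkR l)].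

Lemma Jdual_feas H eps l : feas l -> Jdual H eps l = (fval H eps l)%:E.
Proof.
case=> h1 h2 h3; rewrite /Jdual !indic_in // !adde0 /fval.
by rewrite /dot mulmxA.
Qed.

Lemma Jdual_fin H eps l : (Jdual H eps l < +oo)%E -> feas l.
Proof.
rewrite /Jdual /indic.
case: pselect => h1; case: pselect => h2; case: pselect => h3 //=;
by rewrite ?adde0 ?ltxx.
Qed.

Definition grad (H : 'M[R]_N) eps (w : 'cV[R]_N) := 2%:R^-1 *: (H *m w) + Wvec n m eps.

Lemma fval_step H eps w D : H^T = H ->
  fval H eps (w + D) = fval H eps w + dot D (grad H eps w) + 4%:R^-1 * dot D (H *m D).
Proof.
move=> HT; rewrite /fval /grad mulmxDr !dotDl !dotDr dotZr (dot_sym D w HT).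
by field.
Qed.

End Feas.

Section Core.
Variable R : realType.
Variable N : nat.
Variable H : 'M[R]_N.
Hypothesis HT : H^T = H.
Hypothesis Hpsd : forall u, 0 <= dot u (H *m u).

Lemma psd_cs (U W : 'cV[R]_N) s A1 A2 : 0 < s ->
  dot U (H *m U) <= A1 -> dot W (H *m W) <= A2 ->
  2 * `|dot U (H *m W)| <= s * A1 + s^-1 * A2.
Proof.
move=> s0 h1 h2.
apply: le_trans (cs_form HT s0 (fun t => Hpsd _)) _.
have si : 0 <= s^-1 by rewrite invr_ge0 ltW.
by apply: lerD; [rewrite ler_pM2l | rewrite ler_wpM2l].
Qed.

Lemma block_vi p (C : set 'cV[R]_p) (x g y z : 'cV[R]_p) (a : R) :
  convex_set C -> 0 < a -> is_proj C (x - a^-1 *: g) y -> C z ->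
  dot g (y - z) + a * dot (y - x) (y - z) <= 0.
Proof.
move=> cC a0 hp Cz.
have := proj_vi cC hp Cz.
have -> : x - a^-1 *: g - y = - (a^-1 *: g + (y - x)).
  by apply/matrixP => i j; rewrite !mxE; ring.
have -> : z - y = - (y - z) by rewrite opprB.
rewrite dotNl dotNr opprK => h; rewrite dotDl dotZl in h.
have : a * (a^-1 * dot g (y - z) + dot (y - x) (y - z)) <= a * 0.
  by rewrite ler_pM2l.
by rewrite mulr0 mulrDr mulrA mulfV ?gt_eqF // mul1r.
Qed.

Section Blk.
Variable p : nat.
Variable E : 'cV[R]_p -> 'cV[R]_N.
Variable blk : 'cV[R]_N -> 'cV[R]_p.
Variable Hb : 'M[R]_p.
Hypothesis hEd : forall x v, dot (E x) v = dot x (blk v).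
Hypothesis hEb : forall x, blk (E x) = x.
Hypothesis hEH : forall x, blk (H *m E x) = Hb *m x.
Hypothesis hElin : forall t x y, E (t *: x + y) = t *: E x + E y.
Hypothesis apos : 0 < lambda_max Hb.
Local Notation a := (lambda_max Hb).

Lemma blk_quad x : dot (E x) (H *m E x) = dot x (Hb *m x).
Proof. by rewrite hEd hEH. Qed.

Lemma blk_ray x : dot (E x) (H *m E x) <= a * dot x x.
Proof. by rewrite blk_quad rayleigh. Qed.

Lemma blk_diag (e d : 'cV[R]_p) s : 0 < s ->
  2 * `|a * dot e d - 2%:R^-1 * dot (E e) (H *m E d)| <=
  s * (a * dot e e) + s^-1 * (a * dot d d).
Proof.
move=> s0.
set A := a *: (1%:M : 'M[R]_N) - 2%:R^-1 *: H.
have AT : A^T = A by rewrite /A linearB /= !linearZ /= trmx1 HT.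
have Aform : forall U W, dot U (A *m W) = a * dot U W - 2%:R^-1 * dot U (H *m W).
  by move=> U W; rewrite /A mulmxBl -!scalemxAl mul1mx dotBr !dotZr.
have EE : forall x y, dot (E x) (E y) = dot x y by move=> x y; rewrite hEd hEb.
have qx : forall x, dot (E x) (A *m E x) = a * dot x x - 2%:R^-1 * dot x (Hb *m x).
  by move=> x; rewrite Aform EE blk_quad.
have hpos : forall t, 0 <= dot (t *: E e + E d) (A *m (t *: E e + E d)).
  move=> t; rewrite -hElin qx.
  have := rayleigh apos (t *: e + d); have := dot_ge0 (t *: e + d).
  move=> h1 h2; have h3 := mulr_ge0 (ltW apos) h1; lra.
have := cs_form AT s0 hpos.
rewrite Aform EE => h; apply: le_trans h _.
have si : 0 <= s^-1 by rewrite invr_ge0 ltW.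
apply: lerD.
  rewrite ler_pM2l // qx; have := Hpsd (E e); rewrite blk_quad; lra.
rewrite ler_wpM2l // qx; have := Hpsd (E d); rewrite blk_quad; lra.
Qed.

End Blk.

Lemma amgm (x S T : R) : 0 <= x -> 0 <= S -> 0 <= T ->
  (forall s, 0 < s -> x <= s * S + s^-1 * T) -> x ^+ 2 <= 4%:R * S * T.
Proof.
move=> x0 S0 T0 h.
have [->|xp] := eqVneq x 0; first by rewrite expr0n /= mulr_ge0 // mulr_ge0.
have xpos : 0 < x by rewrite lt_def xp x0.
have [S0'|Sp] := eqVneq S 0.
  have [T0'|Tp] := eqVneq T 0.
    by have := h 1 ltr01; rewrite S0' T0' !mulr0 addr0 => hx; lra.
  have Tpos : 0 < T by rewrite lt_def Tp T0.
  have := h (2%:R * T / x); rewrite S0' mulr0 add0r.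
  have hs : 0 < 2%:R * T / x by rewrite divr_gt0 // mulr_gt0.
  move=> /(_ hs).
  have -> : (2%:R * T / x)^-1 * T = x / 2%:R by field; rewrite ?gt_eqF.
  lra.
have Spos : 0 < S by rewrite lt_def Sp S0.
have hs : 0 < x / (2%:R * S) by rewrite divr_gt0 // mulr_gt0.
have := h _ hs.
have -> : x / (2%:R * S) * S = x / 2%:R by field; rewrite gt_eqF.
have -> : (x / (2%:R * S))^-1 * T = 2%:R * S * T / x by field; rewrite ?gt_eqF.
move=> hh.
have : x / 2%:R <= 2%:R * S * T / x by lra.
rewrite ler_pdivlMr // => h2.
have -> : x ^+ 2 = 2%:R * (x / 2%:R * x) by field.
have -> : 4%:R * S * T = 2%:R * (2%:R * S * T) by ring.
by rewrite ler_pM2l.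
Qed.

End Core.

Section Iter.
Variable R : realType.
Variables n m : nat.
Local Notation N := (dimN n m).
Variable H : 'M[R]_N.
Variable eps : R.
Hypothesis HT : H^T = H.
Hypothesis Hpsd : forall u, 0 <= dot u (H *m u).
Hypothesis aQ : 0 < lambda_max (HQQ H).
Hypothesis aP : 0 < lambda_max (HPP H).
Hypothesis aR : 0 < lambda_max (HRR H).

Local Notation a := (lambda_max (HQQ H)).
Local Notation b := (lambda_max (HPP H)).
Local Notation c := (lambda_max (HRR H)).
Local Notation f := (fval H eps).
Local Notation G := (grad H eps).

Lemma blkQ_W : blkQ (Wvec n m eps) = 0.
Proof. by rewrite /blkQ /Wvec !col_mxKu. Qed.
Lemma blkP_W : blkP (Wvec n m eps) = (mxvec (eps%:M : 'M[R]_n))^T.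
Proof. by rewrite /blkP /Wvec col_mxKu col_mxKd. Qed.
Lemma blkR_W : blkR (Wvec n m eps) = (mxvec (eps%:M : 'M[R]_m))^T.
Proof. by rewrite /blkR /Wvec col_mxKd. Qed.

Lemma grad_add w D : G (w + D) = G w + 2%:R^-1 *: (H *m D).
Proof. by rewrite /grad mulmxDr scalerDr addrAC. Qed.

Lemma rayQ x : dot (EQ m x) (H *m EQ m x) <= a * dot x x.
Proof. by rewrite dot_EQ blkQ_HEQ rayleigh. Qed.
Lemma rayP x : dot (EP m x) (H *m EP m x) <= b * dot x x.
Proof. by rewrite dot_EP blkP_HEP rayleigh. Qed.
Lemma rayR x : dot (ER n x) (H *m ER n x) <= c * dot x x.
Proof. by rewrite dot_ER blkR_HER rayleigh. Qed.

Lemma vec_eq3 (x y z : 'cV[R]_N) : x + (y - x) + (z - y) = z.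
Proof. by apply/matrixP => i j; rewrite !mxE; ring. Qed.

Lemma iter_step l l' : feas l -> bsum_step H eps l l' ->
  let dQ := blkQ l' - blkQ l in
  let dP := blkP l' - blkP l in
  let dR := blkR l' - blkR l in
  let T := a * dot dQ dQ + b * dot dP dP + c * dot dR dR in
  [/\ feas l', f l' <= f l - 3%:R / 4%:R * T &
   forall ls, feas ls ->
   let eQ := blkQ l' - blkQ ls in
   let eP := blkP l' - blkP ls in
   let eR := blkR l' - blkR ls in
   let S := a * dot eQ eQ + b * dot eP eP + c * dot eR eR in
   forall s, 0 < s -> f l' - f ls <= s * S + s^-1 * T].
Proof.
move=> [fQ fP fR] [pQ pP pR] dQ dP dR T.
set w1 := l + EQ m dQ.
set w2 := w1 + EP m dP.
have hw1Q : blkQ w1 = blkQ l' by rewrite blkQD blkQ_EQ /dQ addrC subrK.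
have hw1P : blkP w1 = blkP l by rewrite blkPD blkP_EQ addr0.
have hw1R : blkR w1 = blkR l by rewrite blkRD blkR_EQ addr0.
have hw2Q : blkQ w2 = blkQ l' by rewrite blkQD blkQ_EP addr0.
have hw2P : blkP w2 = blkP l' by rewrite blkPD blkP_EP hw1P /dP addrC subrK.
have hw2R : blkR w2 = blkR l by rewrite blkRD blkR_EP addr0.
have hl' : l' = w2 + ER n dR.
  apply: blk_eq.
  - by rewrite blkQD blkQ_ER addr0 hw2Q.
  - by rewrite blkPD blkP_ER addr0 hw2P.
  - by rewrite blkRD blkR_ER hw2R /dR addrC subrK.
set gQ := blkQ (G l).
set gP := blkP (G w1).
set gR := blkR (G w2).
have inQ : blkQ l - (2 * a)^-1 *: (HQQ H *m blkQ l + HQP H *m blkP l + HQR H *m blkR l)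
          = blkQ l - a^-1 *: gQ.
  by rewrite /gQ /grad (blkQD (2%:R^-1 *: _)) blkQ_W addr0 blkQZ blkQ_mul scalerA invfM mulrC.
have inP : blkP l - (2 * b)^-1 *: (HPQ H *m blkQ l' + HPP H *m blkP l + HPR H *m blkR l)
             - b^-1 *: (mxvec (eps%:M : 'M[R]_n))^T = blkP w1 - b^-1 *: gP.
  rewrite /gP /grad (blkPD (2%:R^-1 *: _)) blkP_W blkPZ blkP_mul hw1Q hw1P hw1R [b^-1 *: (_ + _)]scalerDr scalerA invfM.
  by rewrite (mulrC b^-1) opprD addrA.
have inR : blkR l - (2 * c)^-1 *: (HRQ H *m blkQ l' + HRP H *m blkP l' + HRR H *m blkR l)
             - c^-1 *: (mxvec (eps%:M : 'M[R]_m))^T = blkR w2 - c^-1 *: gR.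
  rewrite /gR /grad (blkRD (2%:R^-1 *: _)) blkR_W blkRZ blkR_mul hw2Q hw2P hw2R [c^-1 *: (_ + _)]scalerDr scalerA invfM.
  by rewrite (mulrC c^-1) opprD addrA.
rewrite inQ in pQ; rewrite inP hw1P in pP; rewrite inR hw2R in pR.
have cv := @Gamma_convex R.
have fl' : feas l' by split; [case: pQ | case: pP | case: pR].
have viQ := fun z => block_vi (cv _) aQ pQ (z := z).
have viP := fun z => block_vi (cv _) aP pP (z := z).
have viR := fun z => block_vi (cv _) aR pR (z := z).
have dQ1 : f w1 <= f l - 3%:R / 4%:R * (a * dot dQ dQ).
  rewrite /w1 fval_step // dot_EQ dot_EQ blkQ_HEQ -/gQ.
  have := viQ _ fQ; rewrite -/dQ => h.
  have := rayleigh aQ dQ; rewrite (dotC dQ gQ); lra.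
have dP1 : f w2 <= f w1 - 3%:R / 4%:R * (b * dot dP dP).
  rewrite /w2 fval_step // dot_EP dot_EP blkP_HEP -/gP.
  have := viP _ fP; rewrite -/dP => h.
  have := rayleigh aP dP; rewrite (dotC dP gP); lra.
have dR1 : f l' <= f w2 - 3%:R / 4%:R * (c * dot dR dR).
  rewrite hl' fval_step // dot_ER dot_ER blkR_HER -/gR.
  have := viR _ fR; rewrite -/dR => h.
  have := rayleigh aR dR; rewrite (dotC dR gR); lra.
split => //; first by rewrite /T; lra.
move=> ls [sQ sP sR] eQ eP eR S s s0.
have conv : f l' - f ls <= dot (l' - ls) (G l').
  have := @fval_step R n m H eps l' (ls - l') HT.
  have -> : l' + (ls - l') = ls by apply/matrixP => i j; rewrite !mxE; ring.
  have := Hpsd (ls - l').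
  have -> : dot (ls - l') (G l') = - dot (l' - ls) (G l').
    by rewrite -dotNl opprB.
  lra.
have split3 : dot (l' - ls) (G l') =
   dot (EQ m eQ) (G l') + dot (EP m eP) (G l') + dot (ER n eR) (G l').
  by rewrite dot_EQ dot_EP dot_ER dot_blk !blkQB !blkPB !blkRB.
have GQ : G l' = G l + 2%:R^-1 *: (H *m (EQ m dQ + EP m dP + ER n dR)).
  by rewrite -grad_add hl' /w2 /w1 -!addrA.
have GP : G l' = G w1 + 2%:R^-1 *: (H *m (EP m dP + ER n dR)).
  by rewrite -grad_add hl' /w2 -!addrA.
have GR : G l' = G w2 + 2%:R^-1 *: (H *m ER n dR).
  by rewrite -grad_add hl'.
have tQ : dot (EQ m eQ) (G l') = dot eQ gQ + 2%:R^-1 * (dot (EQ m eQ) (H *m EQ m dQ)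
     + dot (EQ m eQ) (H *m EP m dP) + dot (EQ m eQ) (H *m ER n dR)).
  by rewrite GQ dotDr dot_EQ dotZr !mulmxDr !dotDr.
have tP : dot (EP m eP) (G l') = dot eP gP + 2%:R^-1 * (dot (EP m eP) (H *m EP m dP)
     + dot (EP m eP) (H *m ER n dR)).
  by rewrite GP dotDr dot_EP dotZr !mulmxDr !dotDr.
have tR : dot (ER n eR) (G l') = dot eR gR + 2%:R^-1 * dot (ER n eR) (H *m ER n dR).
  by rewrite GR dotDr dot_ER dotZr.
have vQ : dot gQ eQ + a * dot dQ eQ <= 0 by apply: viQ.
have vP : dot gP eP + b * dot dP eP <= 0 by apply: viP.
have vR : dot gR eR + c * dot dR eR <= 0 by apply: viR.
have bQQ := blk_diag HT Hpsd (@dot_EQ R n m) (@blkQ_EQ R n m) (@blkQ_HEQ R n m H)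
              (@EQ_lin R n m) aQ eQ dQ s0.
have bPP := blk_diag HT Hpsd (@dot_EP R n m) (@blkP_EP R n m) (@blkP_HEP R n m H)
              (@EP_lin R n m) aP eP dP s0.
have bRR := blk_diag HT Hpsd (@dot_ER R n m) (@blkR_ER R n m) (@blkR_HER R n m H)
              (@ER_lin R n m) aR eR dR s0.
have bQP := psd_cs HT Hpsd s0 (rayQ eQ) (rayP dP).
have bQR := psd_cs HT Hpsd s0 (rayQ eQ) (rayR dR).
have bPR := psd_cs HT Hpsd s0 (rayP eP) (rayR dR).
set QQ := dot (EQ m eQ) (H *m EQ m dQ) in tQ bQQ.
set PP := dot (EP m eP) (H *m EP m dP) in tP bPP.
set RR := dot (ER n eR) (H *m ER n dR) in tR bRR.
set QP := dot (EQ m eQ) (H *m EP m dP) in tQ bQP.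
set QR := dot (EQ m eQ) (H *m ER n dR) in tQ bQR.
set PR := dot (EP m eP) (H *m ER n dR) in tP bPR.
have nN : forall x : R, - x <= `|x| by move=> x; rewrite -normrN ler_norm.
have n1 := ler_norm (a * dot eQ dQ - 2%:R^-1 * QQ).
have n1' := nN (a * dot eQ dQ - 2%:R^-1 * QQ).
have n2' := nN (b * dot eP dP - 2%:R^-1 * PP).
have n3' := nN (c * dot eR dR - 2%:R^-1 * RR).
have n4 := ler_norm QP. have n5 := ler_norm QR. have n6 := ler_norm PR.
rewrite (dotC dQ eQ) in vQ; rewrite (dotC dP eP) in vP; rewrite (dotC dR eR) in vR.
rewrite (dotC gQ eQ) in vQ; rewrite (dotC gP eP) in vP; rewrite (dotC gR eR) in vR.
have si0 : 0 <= s^-1 by rewrite invr_ge0 ltW.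
have p1 := mulr_ge0 (ltW s0) (mulr_ge0 (ltW aP) (dot_ge0 eP)).
have p2 := mulr_ge0 (ltW s0) (mulr_ge0 (ltW aR) (dot_ge0 eR)).
have p3 := mulr_ge0 si0 (mulr_ge0 (ltW aQ) (dot_ge0 dQ)).
have p4 := mulr_ge0 si0 (mulr_ge0 (ltW aP) (dot_ge0 dP)).
rewrite /S /T !mulrDr.
lra.
Qed.

End Iter.

Section Rate.
Variable R : realFieldType.

Lemma rate_step (x Dk s c K : R) : 0 < s -> 1 <= K -> 2 <= c -> 0 <= x ->
  x ^+ 2 <= s * (Dk - x) -> Dk * K <= c * s -> x * (K + 1) <= c * s.
Proof.
move=> s0 K1 c2 x0 hx hD.
rewrite leNgt; apply/negP => hX.
have K0 : 0 < K by lra.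
set X := x * (K + 1) in hX.
have cs0 : 0 <= c * s by apply: mulr_ge0; lra.
(* multiply hx by K (K+1)^2 *)
have h1 : K * X ^+ 2 + s * K * (K + 1) * X <= s * (K + 1) ^+ 2 * (Dk * K).
  have : K * (K + 1) ^+ 2 * (x ^+ 2 + s * x) <= K * (K + 1) ^+ 2 * (s * Dk).
    rewrite ler_pM2l; last by apply: mulr_gt0 => //; apply: exprn_gt0; lra.
    lra.
  have -> : K * X ^+ 2 + s * K * (K + 1) * X = K * (K + 1) ^+ 2 * (x ^+ 2 + s * x) by rewrite /X; ring.
  have -> : s * (K + 1) ^+ 2 * (Dk * K) = K * (K + 1) ^+ 2 * (s * Dk) by ring.
  by [].
have h2 : s * (K + 1) ^+ 2 * (Dk * K) <= s * (K + 1) ^+ 2 * (c * s).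
  by rewrite ler_pM2l // mulr_gt0 // exprn_gt0; lra.
have h3 : K * (c * s) ^+ 2 + s * K * (K + 1) * (c * s) < K * X ^+ 2 + s * K * (K + 1) * X.
  have hXX : (c * s) ^+ 2 < X ^+ 2.
    by rewrite ltr_pXn2r // ?nnegrE //; lra.
  have e1 : K * (c * s) ^+ 2 < K * X ^+ 2 by rewrite ltr_pM2l.
  have e2 : s * K * (K + 1) * (c * s) <= s * K * (K + 1) * X.
    rewrite ler_pM2l; [lra | apply: mulr_gt0; [apply: mulr_gt0 => // | lra]].
  lra.
have h4 : s * (K + 1) ^+ 2 * (c * s) <= K * (c * s) ^+ 2 + s * K * (K + 1) * (c * s).
  rewrite -subr_ge0.
  have -> : K * (c * s) ^+ 2 + s * K * (K + 1) * (c * s) - s * (K + 1) ^+ 2 * (c * s)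
     = c * s * s * (K * c - K - 1) by ring.
  apply: mulr_ge0; first by apply: mulr_ge0 => //; lra.
  nra.
lra.
Qed.


Lemma rate_base (x D0 s c : R) : 0 < s -> 0 <= x -> 2 <= c -> D0 <= c ->
  4%:R * s^-1 - 2%:R <= c -> x ^+ 2 <= s * (D0 - x) -> x <= c * s.
Proof.
move=> s0 x0 c2 cD c4 hx.
have cs4 : 4%:R - 2%:R * s <= c * s.
  have : s * (4%:R * s^-1 - 2%:R) <= s * c by rewrite ler_pM2l.
  have -> : s * (4%:R * s^-1 - 2%:R) = 4%:R - 2%:R * s by field; rewrite gt_eqF.
  by rewrite (mulrC c).
rewrite leNgt; apply/negP => hX.
have cs0 : 0 < c * s by apply: mulr_gt0 => //; lra.
have h1 : (c * s) ^+ 2 < x ^+ 2 by rewrite ltr_pXn2r // ?nnegrE //; lra.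
have h2 : s * (c * s) < s * x by rewrite ltr_pM2l.
have h3 : s * D0 <= s * c by rewrite ler_pM2l.
have h4 : (s * c) * (c * s + s) < (s * c) * 1.
  have -> : (s * c) * (c * s + s) = (c * s) ^+ 2 + s * (c * s) by ring.
  lra.
have sc0 : 0 < s * c by rewrite mulrC.
rewrite ltr_pM2l // in h4.
lra.
Qed.

Lemma rate (D : nat -> R) (s : R) : 0 <= s -> (forall k, 0 <= D k) ->
  (forall k, D k.+1 ^+ 2 <= s * (D k - D k.+1)) ->
  forall k, (1 <= k)%N ->
  D k <= Num.max (Num.max (4%:R * s^-1 - 2%:R) (D 0%N)) 2%:R * (s / k%:R).
Proof.
move=> s0 D0 hD.
set c := Num.max _ _.
have c2 : 2%:R <= c by rewrite /c le_max lexx orbT.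
have cD : D 0%N <= c by rewrite /c !le_max lexx orbT.
have c4 : 4%:R * s^-1 - 2%:R <= c by rewrite /c !le_max lexx.
have [s00|sn0] := eqVneq s 0.
  case=> // k _; rewrite s00 mul0r mulr0.
  move: hD; rewrite s00 => hD.
  have := hD k; rewrite mul0r => h.
  have := D0 k.+1; have : D k.+1 ^+ 2 = 0 by apply/le_anti; rewrite h sqr_ge0.
  by move/eqP; rewrite sqrf_eq0 => /eqP ->.
have spos : 0 < s by rewrite lt_def sn0 s0.
have main : forall k, D k.+1 * k.+1%:R <= c * s.
  elim=> [|k IH].
    rewrite mulr1; apply: rate_base (D0 _) c2 cD c4 (hD 0%N) => //.
  have -> : (k.+2)%:R = (k.+1)%:R + 1 :> R by rewrite natr1.
  apply: (rate_step spos _ c2 (D0 _) (hD k.+1) IH).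
  by rewrite ler1n.
case=> // k _.
rewrite mulrA ler_pdivlMr ?ltr0n //.
Qed.

End Rate.

Unset Implicit Arguments.

Theorem theorem3 (R : realType) (n m : nat) (H : 'M[R]_(dimN n m)) (eps : R)
  (lstar : 'cV[R]_(dimN n m)) (lam : nat -> 'cV[R]_(dimN n m)) (Rad : R) :
  is_psd H ->
  0 < eps ->
  0 < lambda_max (HQQ H) -> 0 < lambda_max (HPP H) -> 0 < lambda_max (HRR H) ->
  is_minimizer H eps lstar ->
  (Jdual H eps (lam 0%N) < +oo)%E ->
  (forall k, bsum_step H eps (lam k) (lam k.+1)) ->
  (* Rad is the (finite) value of sup_{l in F, l' in Gamma_+^*} ||l - l'|| *)
  (forall l l', (Jdual H eps l <= Jdual H eps (lam 0%N))%E -> is_minimizer H eps l' ->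
     enorm (l - l') <= Rad) ->
  (forall B, (forall l l', (Jdual H eps l <= Jdual H eps (lam 0%N))%E ->
     is_minimizer H eps l' -> enorm (l - l') <= B) -> Rad <= B) ->
  let sigma := (9%:R * spec_norm H * Rad ^+ 2)^-1 in
  let c := Order.max (Order.max (4%:R * sigma - 2%:R)%:E
                       (Jdual H eps (lam 0%N) - Jdual H eps lstar)%E) 2%:E in
  forall k : nat, (1 <= k)%N ->
    (Jdual H eps (lam k) - Jdual H eps lstar <= c * (sigma^-1 / k%:R)%:E)%E.
Proof.
move=> [HT Hpsd0] eps0 aQ aP aR hmin hfin hstep hRad _ sigma c k k1.
have Hpsd : forall u, 0 <= dot u (H *m u).
  by move=> u; rewrite /dot mulmxA; apply: Hpsd0.
have f0 : feas (lam 0%N) := Jdual_fin hfin.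
have fs : feas lstar.
  by apply: Jdual_fin; apply: le_lt_trans (hmin (lam 0%N)) hfin.
have fk : forall k, feas (lam k).
  elim=> // j IH.
  by case: (iter_step HT Hpsd aQ aP aR IH (hstep j)).
set f := fval H eps.
have desc : forall j, f (lam j.+1) <= f (lam j).
  move=> j; case: (iter_step HT Hpsd aQ aP aR (fk j) (hstep j)) => _ h _.
  apply: le_trans h _; rewrite lerBlDr lerDl mulr_ge0 //.
  - by rewrite divr_ge0 ?ler0n.
  - by rewrite !addr_ge0 // mulr_ge0 ?dot_ge0 // ltW.
have mono : forall j, f (lam j) <= f (lam 0%N).
  elim=> // j IH; exact: le_trans (desc j) IH.
set D := fun j => f (lam j) - f lstar.
have D0 : forall j, 0 <= D j.
  move=> j; rewrite /D subr_ge0.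
  have := hmin (lam j); rewrite !Jdual_feas // lee_fin; exact.
set s := 9%:R * spec_norm H * Rad ^+ 2.
have Rad0 : 0 <= Rad.
  apply: le_trans (hRad lstar lstar _ hmin).
    by rewrite subrr enormE dot0r sqrtr0.
  exact: hmin.
have sQ : lambda_max (HQQ H) <= spec_norm H.
  apply: (lmax_le_spec (E := @EQ R n m)) => // x.
    by rewrite dot_EQ blkQ_EQ.
  by rewrite dot_EQ blkQ_HEQ.
have sP : lambda_max (HPP H) <= spec_norm H.
  apply: (lmax_le_spec (E := @EP R n m)) => // x.
    by rewrite dot_EP blkP_EP.
  by rewrite dot_EP blkP_HEP.
have sR : lambda_max (HRR H) <= spec_norm H.
  apply: (lmax_le_spec (E := @ER R n m)) => // x.
    by rewrite dot_ER blkR_ER.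
  by rewrite dot_ER blkR_HER.
have Hn0 : 0 <= spec_norm H by apply: le_trans (ltW aQ) sQ.
have s0 : 0 <= s by rewrite /s !mulr_ge0 // sqr_ge0.
have rec : forall j, D j.+1 ^+ 2 <= s * (D j - D j.+1).
  move=> j.
  case: (iter_step HT Hpsd aQ aP aR (fk j) (hstep j)) => _ hdesc /(_ lstar fs) herr.
  set dQ := blkQ (lam j.+1) - blkQ (lam j) in hdesc herr.
  set dP := blkP (lam j.+1) - blkP (lam j) in hdesc herr.
  set dR := blkR (lam j.+1) - blkR (lam j) in hdesc herr.
  set eQ := blkQ (lam j.+1) - blkQ lstar in herr.
  set eP := blkP (lam j.+1) - blkP lstar in herr.
  set eR := blkR (lam j.+1) - blkR lstar in herr.
  set T := _ + _ + _ in hdesc herr.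
  have T0 : 0 <= T by rewrite /T !addr_ge0 // mulr_ge0 ?dot_ge0 // ltW.
  cbv zeta in herr.
  set S := (_ * dot eQ eQ + _ + _) in herr.
  have S0 : 0 <= S by rewrite /S !addr_ge0 // mulr_ge0 ?dot_ge0 // ltW.
  have am := amgm (D0 j.+1) S0 T0 herr.
  have dist : dot (lam j.+1 - lstar) (lam j.+1 - lstar) <= Rad ^+ 2.
    have := hRad (lam j.+1) lstar.
    rewrite !Jdual_feas // lee_fin => /(_ (mono _) hmin).
    rewrite enormE => h.
    rewrite -(sqr_sqrtr (dot_ge0 (lam j.+1 - lstar))).
    by rewrite ler_pXn2r // nnegrE sqrtr_ge0.
  have SA : S <= spec_norm H * Rad ^+ 2.
    apply: le_trans (_ : S <= spec_norm H * dot (lam j.+1 - lstar) (lam j.+1 - lstar)) _.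
      rewrite dot_blk !blkQB !blkPB !blkRB -/eQ -/eP -/eR /S !mulrDr.
      have := dot_ge0 eQ; have := dot_ge0 eP; have := dot_ge0 eR.
      move=> g1 g2 g3.
      apply: lerD; first apply: lerD.
      - by rewrite ler_wpM2r.
      - by rewrite ler_wpM2r.
      - by rewrite ler_wpM2r.
    by rewrite ler_wpM2l.
  have TD : T <= 4%:R / 3%:R * (D j - D j.+1).
    rewrite /D /f /=; lra.
  apply: le_trans am _.
  have A0 : 0 <= spec_norm H * Rad ^+ 2 by rewrite mulr_ge0 // sqr_ge0.
  have U0 : 0 <= D j - D j.+1 by lra.
  apply: (@le_trans _ _ (4%:R * (spec_norm H * Rad ^+ 2) * (4%:R / 3%:R * (D j - D j.+1)))).
    have := ler_wpM2r T0 SA; have := ler_wpM2l A0 TD; lra.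
  have AU := mulr_ge0 A0 U0.
  rewrite /s.
  have -> : 4%:R * (spec_norm H * Rad ^+ 2) * (4%:R / 3%:R * (D j - D j.+1))
      = 16%:R / 3%:R * (spec_norm H * Rad ^+ 2 * (D j - D j.+1)) by ring.
  have -> : 9%:R * spec_norm H * Rad ^+ 2 * (D j - D j.+1)
      = 9%:R * (spec_norm H * Rad ^+ 2 * (D j - D j.+1)) by ring.
  lra.
have := rate s0 D0 rec k1.
rewrite /c /sigma invrK -/s.
rewrite !Jdual_feas // -EFinB -!EFin_max -EFinM lee_fin.
by [].
Qed.
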